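(* Let $n\ge1$ and let $S\in GL(4n,\mathbb{R})$ be written in $2n\times2n$ blocks as $S=\begin{pmatrix}A&B\\C&D\end{pmatrix}$. Suppose that for every real symmetric $\varGamma\in\mathbb{R}^{2n\times2n}$ the matrix $S\begin{pmatrix}\varGamma&0\\0&\varGamma\end{pmatrix}S^{T}$ is $2n\times2n$ block diagonal. Then: (i) $S$ is either (a) of the form $\begin{pmatrix}A&0\\0&D\end{pmatrix}$ or $\begin{pmatrix}0&B\\C&0\end{pmatrix}$, or (b) of the form $\begin{pmatrix}A&B\\C&D\end{pmatrix}$, where the blocks $A,B,C,D\in\mathbb{R}^{2n\times2n}$ appearing are invertible; (ii) $S\begin{pmatrix}X&0\\0&X\end{pmatrix}S^{T}$ is $2n\times2n$ block diagonal for all $X\in\mathbb{R}^{2n\times2n}$. *)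

(* Defs.v *)
From HB Require Import structures.
From mathcomp Require Import all_boot all_order all_algebra.
From mathcomp Require Export reals.
Set Implicit Arguments. Unset Strict Implicit. Unset Printing Implicit Defensive.
Import GRing.Theory Num.Theory.
Local Open Scope ring_scope.

Definition block_diag {R : pzRingType} (m : nat) (M : 'M[R]_(m + m)) : Prop :=
  ursubmx M = 0 /\ dlsubmx M = 0.

(* Main.v *)
Require Import Defs.
From HB Require Import structures.
From mathcomp Require Import all_boot all_order all_algebra.
From mathcomp Require Import reals.
From mathcomp Require Import lra ring.
Import GRing.Theory Num.Theory.
Local Open Scope ring_scope.

Lemma delta_mulE (R : realType) m (i j k l : 'I_m) (Y : 'M[R]_m) :
  (delta_mx i j *m Y) k l = (k == i)%:R * Y j l.
Proof.
rewrite mxE (bigD1 j) //= big1 ?addr0; first by rewrite mxE eqxx andbT.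
by move=> t /negPf tj; rewrite mxE tj andbF mul0r.
Qed.

Lemma mul_deltaE (R : realType) m (i j k l : 'I_m) (Y : 'M[R]_m) :
  (Y *m delta_mx i j) k l = Y k i * (j == l)%:R.
Proof.
rewrite mxE (bigD1 i) //= big1 ?addr0; first by rewrite mxE eqxx /= eq_sym.
by move=> t /negPf ti; rewrite mxE ti /= mulr0.
Qed.

Lemma comm_scalar (R : realType) m (Y : 'M[R]_m) (i0 : 'I_m) :
  (forall X, X *m Y = Y *m X) -> Y = (Y i0 i0)%:M.
Proof.
move=> H; apply/matrixP=> k l; rewrite mxE.
have E1 : Y k l = (k == l)%:R * Y l l.
  by have := congr1 (fun M : 'M[R]_m => M k l) (H (delta_mx l l)); rewrite delta_mulE mul_deltaE eqxx mulr1.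
have E2 : Y i0 i0 = Y k k.
  by have := congr1 (fun M : 'M[R]_m => M k i0) (H (delta_mx k i0)); rewrite delta_mulE mul_deltaE !eqxx mul1r mulr1.
rewrite E1 E2; case: eqP => [->|_]; by rewrite ?mul1r ?mul0r.
Qed.

Definition Jm (R : realType) m : 'M[R]_(m + m) := block_mx 1%:M 0 0 (- 1%:M).

Lemma neg_self (R : realType) m n (M : 'M[R]_(m, n)) : - M = M -> M = 0.
Proof.
move=> H; apply/matrixP=> i j; have := congr1 (fun X : 'M[R]_(m,n) => X i j) H.
rewrite !mxE => h; lra.
Qed.

Lemma bd_iff (R : realType) m (M : 'M[R]_(m + m)) :
  block_diag M <-> M *m Jm R m = Jm R m *m M.
Proof.
rewrite /block_diag /Jm -[M]submxK !mulmx_block.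
rewrite !mulmx0 !mul0mx !mulmx1 !mul1mx !mulmxN !mulNmx !mulmx1 !mul1mx !addr0 !add0r.
rewrite block_mxKur block_mxKdl.
split.
  by case=> -> ->; rewrite !oppr0.
move/eq_block_mx=> [_ h1 h2 _]; split; apply: neg_self => //.
Qed.

Lemma unit_top (R : realType) m (A B C D : 'M[R]_m) (l : R) :
  block_mx A B C D \in unitmx -> A = l *: B -> B \in unitmx.
Proof.
move=> hS hA; rewrite unitmxE unitfE; apply/negP => /det0P [v vn0 vB].
have : row_mx v 0 *m block_mx A B C D = 0.
  by rewrite mul_row_block !mul0mx !addr0 hA -scalemxAr vB scaler0 row_mx0.
move/(congr1 (mulmx^~ (invmx (block_mx A B C D)))); rewrite mulmxK // mul0mx.
move/eqP; rewrite -row_mx0 => /eqP /eq_row_mx [hv _]; by rewrite hv eqxx in vn0.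
Qed.

Lemma unit_bot (R : realType) m (A B C D : 'M[R]_m) (l : R) :
  block_mx A B C D \in unitmx -> C = l *: D -> D \in unitmx.
Proof.
move=> hS hA; rewrite unitmxE unitfE; apply/negP => /det0P [v vn0 vB].
have : row_mx 0 v *m block_mx A B C D = 0.
  by rewrite mul_row_block !mul0mx !add0r hA -scalemxAr vB scaler0 row_mx0.
move/(congr1 (mulmx^~ (invmx (block_mx A B C D)))); rewrite mulmxK // mul0mx.
move/eqP; rewrite -row_mx0 => /eqP /eq_row_mx [_ hv]; by rewrite hv eqxx in vn0.
Qed.

Lemma swap_cols (R : realType) m (A B C D : 'M[R]_m) :
  block_mx A B C D \in unitmx -> block_mx B A D C \in unitmx.
Proof.
move=> hS.
have -> : block_mx B A D C = block_mx A B C D *m block_mx 0 1%:M 1%:M 0.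
  by rewrite mulmx_block !mulmx0 !mulmx1 !add0r !addr0.
rewrite unitmx_mul hS /=.
have h : block_mx (0 : 'M[R]_m) 1%:M 1%:M 0 *m block_mx 0 1%:M 1%:M 0 = 1%:M.
  by rewrite mulmx_block !mulmx0 !mulmx1 !add0r !addr0 -scalar_mx_block.
by case: (mulmx1_unit h).
Qed.

Arguments unit_top {R m A B C D l}.
Arguments unit_bot {R m A B C D l}.
Arguments swap_cols {R m A B C D}.
Arguments comm_scalar {R m Y}.
Arguments neg_self {R m n M}.

Theorem lemma5 (R : realType) (n : nat) (hn : (0 < n)%N)
  (A B C D : 'M[R]_(2 * n))
  (hS : block_mx A B C D \in unitmx)
  (hyp : forall G : 'M[R]_(2 * n), G^T = G ->
     block_diag (block_mx A B C D *m block_mx G 0 0 G *m (block_mx A B C D)^T)) :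
  ((B = 0 /\ C = 0 /\ A \in unitmx /\ D \in unitmx)
   \/ (A = 0 /\ D = 0 /\ B \in unitmx /\ C \in unitmx)
   \/ (A \in unitmx /\ B \in unitmx /\ C \in unitmx /\ D \in unitmx))
  /\ (forall X : 'M[R]_(2 * n),
     block_diag (block_mx A B C D *m block_mx X 0 0 X *m (block_mx A B C D)^T)).
Proof.
set S := block_mx A B C D.
set J := Jm R (2 * n).
have hST : S^T \in unitmx by rewrite unitmx_tr.
have JT : J^T = J by rewrite /J /Jm tr_block_mx !trmx0 tr_scalar_mx linearN /= tr_scalar_mx.
set K := invmx S *m J *m S.
have SK : S *m K = J *m S by rewrite /K !mulmxA mulmxV // mul1mx.
have KT : K^T = S^T *m J *m invmx S^T by rewrite /K !trmx_mul trmx_inv JT mulmxA.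
have KTS : K^T *m S^T = S^T *m J by rewrite KT mulmxKV.
have commG : forall G, G^T = G -> block_mx G 0 0 G *m K^T = K *m block_mx G 0 0 G.
  move=> G hG; have /bd_iff h := hyp G hG.
  rewrite KT; transitivity (invmx S *m (S *m block_mx G 0 0 G *m S^T *m J) *m invmx S^T).
    by rewrite !mulmxA mulVmx // mul1mx.
  rewrite h /K !mulmxA -(mulmxA _ S^T) mulmxV // mulmx1.
  done.
have JJ : J *m J = 1%:M.
  rewrite /J /Jm mulmx_block !mulmx0 !mul0mx !addr0 !add0r mulmx1 mulmxN mulmx1 opprK.
  by rewrite -scalar_mx_block.
have KK : K *m K = 1%:M.
  by rewrite /K !mulmxA mulmxK // -(mulmxA _ J J) JJ mulmx1 mulVmx.
have trK : \tr K = 0.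
  rewrite /K mxtrace_mulC !mulmxA mulmxV // mul1mx /J /Jm mxtrace_block linearN /=.
  by rewrite subrr.
clearbody K.
have Ksym : K^T = K.
  by have := commG 1%:M (tr_scalar_mx _ _); rewrite -scalar_mx_block mul1mx mulmx1.
pose P (X : 'M[R]_(2 * n)) := block_mx X 0 0 X *m K = K *m block_mx X 0 0 X.
have P0 : P 0 by rewrite /P block_mx0 mul0mx mulmx0.
have Padd : forall X Y, P X -> P Y -> P (X + Y).
  move=> X Y hX hY; rewrite /P.
  have -> : block_mx (X + Y) 0 0 (X + Y) = block_mx X 0 0 X + block_mx Y 0 0 Y.
    by rewrite add_block_mx !addr0.
  by rewrite mulmxDl mulmxDr hX hY.
have Pscale : forall a X, P X -> P (a *: X).
  move=> a X hX; rewrite /P.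
  have -> : block_mx (a *: X) 0 0 (a *: X) = a *: block_mx X 0 0 X.
    by rewrite scale_block_mx !scaler0.
  by rewrite -scalemxAl hX scalemxAr.
have Pmul : forall X Y, P X -> P Y -> P (X *m Y).
  move=> X Y hX hY; rewrite /P.
  have -> : block_mx (X *m Y) 0 0 (X *m Y) = block_mx X 0 0 X *m block_mx Y 0 0 Y.
    by rewrite mulmx_block !mulmx0 !mul0mx !addr0 !add0r.
  by rewrite -mulmxA hY mulmxA hX -mulmxA.
have Psym : forall G, G^T = G -> P G by move=> G hG; rewrite /P -{1}Ksym commG.
have Pdelta : forall i j, P (delta_mx i j).
  move=> i j; case: (eqVneq i j) => [<-|nij].
    by apply: Psym; rewrite trmx_delta.
  have -> : delta_mx i j = delta_mx i i *m (delta_mx i j + delta_mx j i) :> 'M[R]_(2 * n).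
    by rewrite mulmxDr mul_delta_mx mul_delta_mx_0 ?addr0 // eq_sym.
  apply: Pmul; apply: Psym; rewrite ?trmx_delta //.
  by rewrite linearD /= !trmx_delta addrC.
have commX : forall X, P X.
  move=> X; rewrite (matrix_sum_delta X).
  apply: (big_ind P) => // i _; apply: (big_ind P) => // j _.
  exact: Pscale.
split; last first.
  move=> X; apply/bd_iff.
  rewrite -!mulmxA -KTS Ksym -/J (mulmxA (block_mx X 0 0 X)) commX.
  by rewrite -mulmxA mulmxA SK -!mulmxA.
have hm : (0 < 2 * n)%N by rewrite muln_gt0.
pose i0 : 'I_(2 * n) := Ordinal hm.
have hK := submxK K.
set K1 := ulsubmx K in hK; set K2 := ursubmx K in hK.
set K3 := dlsubmx K in hK; set K4 := drsubmx K in hK.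
have cK : forall X, [/\ X *m K1 = K1 *m X, X *m K2 = K2 *m X,
                       X *m K3 = K3 *m X & X *m K4 = K4 *m X].
  move=> X; have := commX X; rewrite /P -hK !mulmx_block.
  rewrite !mulmx0 !mul0mx !addr0 !add0r.
  by case/eq_block_mx.
have eK1 : K1 = (K1 i0 i0)%:M by apply: comm_scalar => X; case: (cK X).
have eK2 : K2 = (K2 i0 i0)%:M by apply: comm_scalar => X; case: (cK X).
have eK3 : K3 = (K3 i0 i0)%:M by apply: comm_scalar => X; case: (cK X).
have eK4 : K4 = (K4 i0 i0)%:M by apply: comm_scalar => X; case: (cK X).
move: (K1 i0 i0) (K2 i0 i0) (K3 i0 i0) (K4 i0 i0) eK1 eK2 eK3 eK4 => a b c d eK1 eK2 eK3 eK4.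
rewrite eK1 eK2 eK3 eK4 in hK.
have entry : forall (x y : R), x%:M = y%:M :> 'M[R]_(2 * n) -> x = y.
  move=> x y /(congr1 (fun M : 'M[R]_(2 * n) => M i0 i0)); by rewrite !mxE eqxx !mulr1n.
have ecb : c = b.
  move: Ksym; rewrite -hK tr_block_mx !tr_scalar_mx => /eq_block_mx [_ h _ _].
  exact: entry.
have eda : d = - a.
  move: trK; rewrite -hK mxtrace_block !mxtrace_scalar -mulrnDl => /eqP.
  rewrite mulrn_eq0 (negbTE (lt0n_neq0 hm)) /= => /eqP h; lra.
have hab : a * a + b * b = 1.
  move: KK; rewrite -hK mulmx_block !mul_scalar_mx !scale_scalar_mx.
  rewrite [1%:M]scalar_mx_block => /eq_block_mx [h _ _ _].
  move: (congr1 (fun M : 'M[R]_(2 * n) => M i0 i0) h); rewrite !mxE eqxx !mulr1n.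
  by rewrite ecb.
move: SK; rewrite -hK /S /J /Jm !mulmx_block !mul_mx_scalar !mul0mx !mul1mx !mulNmx !mul1mx.
rewrite !addr0 !add0r ecb eda => /eq_block_mx [e1 e2 e3 e4].
have hS' := swap_cols hS.
case: (eqVneq b 0) => [b0|bn0].
  move: e1 e2 e3 e4; rewrite b0 !scale0r !addr0 !add0r => e1 e2 e3 e4.
  have : (a - 1) * (a + 1) = 0.
    by rewrite b0 mulr0 addr0 in hab; rewrite mulrDr !mulrBl mul1r mulr1 hab; ring.
  move/eqP; rewrite mulf_eq0 => /orP [] /eqP ha.
    have a1 : a = 1 by lra.
    move: e2 e3; rewrite a1 scaleN1r scale1r => e2 e3.
    have B0 : B = 0 by apply: neg_self.
    have C0 : C = 0 by apply: neg_self.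
    left; split => //; split => //; split.
      by apply: (unit_top (l := 0) hS'); rewrite B0 scale0r.
    by apply: (unit_bot (l := 0) hS); rewrite C0 scale0r.
  have a1 : a = -1 by lra.
  move: e1 e4; rewrite a1 opprK scaleN1r scale1r => e1 e4.
  have A0 : A = 0 by apply: neg_self.
  have D0 : D = 0 by apply: neg_self; rewrite {2}e4.
  right; left; split => //; split => //; split.
    by apply: (unit_top (l := 0) hS); rewrite A0 scale0r.
  by apply: (unit_bot (l := 0) hS'); rewrite D0 scale0r.
have ha1 : 1 + a != 0.
  apply/eqP => h; have a1 : a = -1 by lra.
  move: hab; rewrite a1 mulrNN mulr1 => h2.
  have : b * b = 0 by lra.
  by move/eqP; rewrite mulf_eq0 orbb (negbTE bn0).
have ha2 : a - 1 != 0.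
  apply/eqP => h; have a1 : a = 1 by lra.
  move: hab; rewrite a1 mulr1 => h2.
  have : b * b = 0 by lra.
  by move/eqP; rewrite mulf_eq0 orbb (negbTE bn0).
have eA : A = ((1 + a) / b) *: B.
  apply/matrixP => i j; move: (congr1 (fun M : 'M[R]_(2 * n) => M i j) e2).
  rewrite !mxE => h.
  have -> : A i j = (b * A i j) / b by field.
  rewrite (_ : b * A i j = (1 + a) * B i j); first by field.
  lra.
have eC : C = ((a - 1) / b) *: D.
  apply/matrixP => i j; move: (congr1 (fun M : 'M[R]_(2 * n) => M i j) e4).
  rewrite !mxE => h.
  have -> : C i j = (b * C i j) / b by field.
  rewrite (_ : b * C i j = (a - 1) * D i j); first by field.
  lra.
have eB : B = (b / (1 + a)) *: A.
  rewrite eA scalerA (_ : _ * _ = 1) ?scale1r //.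
  by field; rewrite ha1 bn0.
have eD : D = (b / (a - 1)) *: C.
  rewrite eC scalerA (_ : _ * _ = 1) ?scale1r //.
  by field; rewrite ha2 bn0.
right; right; split; [|split; [|split]].
- exact: (unit_top hS' eB).
- exact: (unit_top hS eA).
- exact: (unit_bot hS' eD).
- exact: (unit_bot hS eC).
Qed.
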